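(* Let $\sigma$ be a relational vocabulary and $\sigma^*$ its extension by relation symbols $C_n$ of arity $n$ for each positive integer $n$. For a $\sigma$-structure $\mathcal{A}$, let $C(\mathcal{A})$ be the $\sigma^*$-structure extending $\mathcal{A}$ with $C_n^{C(\mathcal{A})}(a_1,\dots,a_n)$ iff $\mathcal{A}\models\mathrm{clique}_n(a_1,\dots,a_n)$. For $\sigma$-structures $\mathcal{A}$ and $\mathcal{B}$ the following are equivalent: (1) Duplicator has a winning strategy for the clique guarded bisimulation game between $\mathcal{A}$ and $\mathcal{B}$; (2) Duplicator has a winning strategy for the atom guarded bisimulation game between $C(\mathcal{A})$ and $C(\mathcal{B})$. Moreover, the equivalence remains true if both games are restricted to a fixed finite number of rounds, or both restricted to guarded sets of width at most $k$ ($k$-guarded sets), or if both are replaced by the corresponding simulation games (from $\mathcal{A}$ to $\mathcal{B}$, respectively from $C(\mathcal{A})$ to $C(\mathcal{B})$).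
   Context: The Gaifman graph of a structure has its elements as vertices, distinct elements adjacent iff they co-occur in a tuple of some relation. For each $n\ge1$, $\mathrm{clique}_n$ is a positive existential formula such that $\mathcal{A}\models\mathrm{clique}_n(a_1,\dots,a_n)$ iff $a_1,\dots,a_n$ form a clique in the Gaifman graph of $\mathcal{A}$. A set $X$ is clique guarded (resp. atom guarded) if it is contained in the set of entries of a finite tuple $\vec a$ satisfying some $\mathrm{clique}_n$ (resp. some atomic formula in which all of its variables occur); it is $k$-guarded if moreover $\vec a$ can be taken of length at most $k$. The $\mathfrak{g}$-guarded bisimulation game between $\mathcal{A}$ and $\mathcal{B}$: $X_0=Y_0=\varnothing$, $\varphi_0=\varnothing$; in round $n+1$ Spoiler either picks a $\mathfrak{g}$-guarded $X_{n+1}$ in $\mathcal{A}$ and Duplicator answers with a $\mathfrak{g}$-guarded $Y_{n+1}$ in $\mathcal{B}$ and a partial isomorphism $\varphi_{n+1}:X_{n+1}\to Y_{n+1}$ agreeing with $\varphi_n$ on $X_{n+1}\cap X_n$, or picks a $\mathfrak{g}$-guarded $Y_{n+1}$ in $\mathcal{B}$ and Duplicator answers with a $\mathfrak{g}$-guarded $X_{n+1}$ in $\mathcal{A}$ and a partial isomorphism $\varphi_{n+1}$ whose inverse agrees with $\varphi_n^{-1}$ on $Y_{n+1}\cap Y_n$. Duplicator wins if he can always respond. The simulation game from $\mathcal{A}$ to $\mathcal{B}$ is the variant where Spoiler only plays in $\mathcal{A}$ and Duplicator's maps $\varphi_{n+1}$ need only be partial homomorphisms (agreeing with $\varphi_n$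 on overlaps). *)

(* Defs.v *)
From Stdlib Require Import List Arith.
Import ListNotations.

Record vocab := Vocab { sym : Type; arity : sym -> nat }.

Record structure (V : vocab) := Structure {
  carrier :> Type;
  rel : sym V -> list carrier -> Prop;
  rel_arity : forall s t, rel s t -> length t = arity V s }.
Arguments rel {V} _ _ _.

Section Basics.
Context {V : vocab} (A : structure V).

Definition gaifman_adj (a b : A) : Prop :=
  a <> b /\ exists s t, rel A s t /\ In a t /\ In b t.

(** [a_1 .. a_n] form a clique in the Gaifman graph
    (semantics of clique_n(a_1,...,a_n)). *)
Definition is_clique (a : list A) : Prop :=
  forall x y, In x a -> In y a -> x = y \/ gaifman_adj x y.

Definition within (k : option nat) (n : nat) : Prop :=
  match k with None => True | Some k => n <= k end.

Definition clique_guarded (k : option nat) (X : A -> Prop) : Prop :=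
  exists a : list A, 1 <= length a /\ within k (length a) /\ is_clique a /\
    forall x, X x -> In x a.

(** [a] (the values of the variables x_1..x_n) satisfies an atomic formula
    in which all of the variables x_1..x_n occur: either R(x_{f 1},...,x_{f m})
    with f onto, i.e. the entries of [a] are exactly the entries of a tuple in
    some relation, or an equality atom x_1 = x_1 / x_1 = x_2. *)
Definition atom_sat (a : list A) : Prop :=
  (exists s t, rel A s t /\ forall x, In x a <-> In x t) \/
  (exists x, a = [x] \/ a = [x; x]).

Definition atom_guarded (k : option nat) (X : A -> Prop) : Prop :=
  exists a : list A, within k (length a) /\ atom_sat a /\
    forall x, X x -> In x a.
End Basics.

(** The extension sigma* and the structure C(A): [inr n] is C_{n+1}. *)
Definition vocab_star (V : vocab) : vocab :=
  Vocab (sym V + nat)%type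
        (fun s => match s with inl s => arity V s | inr n => S n end).

Definition rel_star {V : vocab} (A : structure V) (s : sym (vocab_star V))
  (t : list A) : Prop :=
  match s with
  | inl s => rel A s t
  | inr n => length t = S n /\ is_clique A t
  end.

Lemma rel_star_arity {V : vocab} (A : structure V) :
  forall s t, rel_star A s t -> length t = arity (vocab_star V) s.
Proof. intros [s|n] t H; simpl in *; [apply (rel_arity V A); exact H | apply H]. Qed.

Definition Cstr {V : vocab} (A : structure V) : structure (vocab_star V) :=
  Structure (vocab_star V) A (rel_star A) (rel_star_arity A).

(** Games.  A position is (the graph of) the current partial map phi_n. *)
Inductive game_kind := Bisim | Sim.

Section Game.
Context {V : vocab} (A B : structure V)
        (gA : (A -> Prop) -> Prop) (gB : (B -> Prop) -> Prop).

Definition partial_iso (X : A -> Prop) (Y : B -> Prop) (P : A -> B -> Prop) :=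
  (forall x y y', P x y -> P x y' -> y = y') /\
  (forall x x' y, P x y -> P x' y -> x = x') /\
  (forall x, X x <-> exists y, P x y) /\
  (forall y, Y y <-> exists x, P x y) /\
  (forall s t u, Forall2 P t u -> (rel A s t <-> rel B s u)).

Definition partial_hom (X : A -> Prop) (Y : B -> Prop) (P : A -> B -> Prop) :=
  (forall x y y', P x y -> P x y' -> y = y') /\
  (forall x, X x <-> exists y, P x y) /\
  (forall x y, P x y -> Y y) /\
  (forall s t u, Forall2 P t u -> rel A s t -> rel B s u).

Definition partial_map (kind : game_kind) :=
  match kind with Bisim => partial_iso | Sim => partial_hom end.

(** Spoiler plays X' in A: Duplicator answers Y', phi' agreeing with phi on X' ∩ X *)
Definition fwd_move (kind : game_kind) (win : (A -> B -> Prop) -> Prop)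
  (P : A -> B -> Prop) : Prop :=
  forall X', gA X' -> exists (Y' : B -> Prop) (P' : A -> B -> Prop),
    gB Y' /\ partial_map kind X' Y' P' /\
    (forall x y, X' x -> P x y -> P' x y) /\ win P'.

(** Spoiler plays Y' in B: Duplicator answers X', phi' whose inverse agrees
    with phi^{-1} on Y' ∩ Y *)
Definition bwd_move (win : (A -> B -> Prop) -> Prop) (P : A -> B -> Prop) : Prop :=
  forall Y', gB Y' -> exists (X' : A -> Prop) (P' : A -> B -> Prop),
    gA X' /\ partial_iso X' Y' P' /\
    (forall x y, Y' y -> P x y -> P' x y) /\ win P'.

Definition spoiler_moves (kind : game_kind) (win : (A -> B -> Prop) -> Prop)
  (P : A -> B -> Prop) : Prop :=
  fwd_move kind win P /\ (kind = Bisim -> bwd_move win P).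

Fixpoint dup_wins_n (kind : game_kind) (n : nat) (P : A -> B -> Prop) : Prop :=
  match n with
  | 0 => True
  | S m => spoiler_moves kind (dup_wins_n kind m) P
  end.

CoInductive dup_wins_inf (kind : game_kind) (P : A -> B -> Prop) : Prop :=
  dup_wins_inf_intro : spoiler_moves kind (dup_wins_inf kind) P -> dup_wins_inf kind P.

Definition empty_map : A -> B -> Prop := fun _ _ => False.

Definition duplicator_wins (kind : game_kind) (rounds : option nat) : Prop :=
  match rounds with
  | None => dup_wins_inf kind empty_map
  | Some n => dup_wins_n kind n empty_map
  end.
End Game.

Definition clique_game {V : vocab} (kind : game_kind) (rounds : option nat)
  (k : option nat) (A B : structure V) : Prop :=
  duplicator_wins A B (clique_guarded A k) (clique_guarded B k) kind rounds.

Definition atom_game_C {V : vocab} (kind : game_kind) (rounds : option nat)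
  (k : option nat) (A B : structure V) : Prop :=
  duplicator_wins (Cstr A) (Cstr B) (atom_guarded (Cstr A) k) (atom_guarded (Cstr B) k)
    kind rounds.

(* Main.v *)
Require Import Defs.
From Stdlib Require Import List Arith Classical.
Import ListNotations.

Definition kok (k : option nat) : Prop :=
  match k with None => True | Some k => 1 <= k end.

Lemma within1 k : kok k -> within k 1.
Proof. destruct k; simpl; auto. Qed.

Lemma guard_equiv {V : vocab} (A : structure V) k :
  inhabited A -> kok k -> forall X,
  clique_guarded A k X <-> atom_guarded (Cstr A) k X.
Proof.
  intros [x0] hk X; split.
  - intros (a & Hl & Hw & Hc & HX).
    destruct a as [|y a']; [simpl in Hl; exfalso; inversion Hl|].
    exists (y :: a'). split; [exact Hw|]. split; [|exact HX].
    left. exists (inr (length a')), (y :: a'). simpl. split.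
    + split; [reflexivity|exact Hc].
    + intros; tauto.
  - intros (a & Hw & Hs & HX).
    destruct a as [|y a'].
    + exists [x0]. simpl. split; [auto|]. split; [apply within1; auto|].
      split; [|intros x Hx; destruct (HX x Hx)].
      intros x y [<-|[]] [<-|[]]; auto.
    + exists (y :: a'). split; [simpl; apply le_n_S, Nat.le_0_l|].
      split; [exact Hw|]. split; [|exact HX].
      destruct Hs as [(s & t & Hr & Hin) | (z & Hz)].
      * intros u v Hu Hv. apply Hin in Hu. apply Hin in Hv.
        destruct s as [s|n]; simpl in Hr.
        -- destruct (classic (u = v)) as [E|E]; [left; exact E|].
           right. split; [exact E|]. exists s, t. auto.
        -- destruct Hr as [_ Hc]. apply Hc; auto.
      * intros u v Hu Hv. left.
        destruct Hz as [Hz|Hz]; rewrite Hz in Hu, Hv; simpl in Hu, Hv;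
          intuition congruence.
Qed.

Lemma cg_clique {V : vocab} (A : structure V) k X :
  clique_guarded A k X -> forall t, (forall x, In x t -> X x) -> is_clique A t.
Proof.
  intros (a & _ & _ & Hc & HX) t Ht x y Hx Hy.
  apply Hc; apply HX; apply Ht; auto.
Qed.

Lemma F2_l {S T : Type} (P : S -> T -> Prop) t u :
  Forall2 P t u -> forall x, In x t -> exists y, P x y.
Proof.
  induction 1; simpl; intros z Hz; [destruct Hz|].
  destruct Hz as [<-|Hz]; eauto.
Qed.

Lemma F2_r {S T : Type} (P : S -> T -> Prop) t u :
  Forall2 P t u -> forall y, In y u -> exists x, P x y.
Proof.
  induction 1; simpl; intros z Hz; [destruct Hz|].
  destruct Hz as [<-|Hz]; eauto.
Qed.

Section Transfer.
Context {V : vocab} (A B : structure V) (k : option nat)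
  (inhA : inhabited A) (inhB : inhabited B) (hk : kok k).

Lemma map_equiv kind X Y (P : A -> B -> Prop) :
  clique_guarded A k X -> clique_guarded B k Y ->
  (partial_map A B kind X Y P <-> partial_map (Cstr A) (Cstr B) kind X Y P).
Proof.
  intros HX HY. destruct kind; simpl.
  - unfold partial_iso. split.
    + intros (h1 & h2 & h3 & h4 & h5).
      split; [exact h1|]. split; [exact h2|]. split; [exact h3|]. split; [exact h4|].
      intros s t u H. destruct s as [s|n]; simpl; [apply h5; exact H|].
      split.
      * intros [Hl _]. split.
        -- etransitivity; [symmetry; exact (Forall2_length H)|exact Hl].
        -- apply (cg_clique B k Y HY). intros y Hy.
           destruct (F2_r _ _ _ H y Hy) as [x Hx]. apply h4; eauto.
      * intros [Hl _]. split.
        -- etransitivity; [exact (Forall2_length H)|exact Hl].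
        -- apply (cg_clique A k X HX). intros x Hx.
           destruct (F2_l _ _ _ H x Hx) as [y Hy]. apply h3; eauto.
    + intros (h1 & h2 & h3 & h4 & h5).
      split; [exact h1|]. split; [exact h2|]. split; [exact h3|]. split; [exact h4|].
      intros s t u H. exact (h5 (inl s) t u H).
  - unfold partial_hom. split.
    + intros (h1 & h3 & h4 & h5).
      split; [exact h1|]. split; [exact h3|]. split; [exact h4|].
      intros s t u H. destruct s as [s|n]; simpl; [apply h5; exact H|].
      intros [Hl _]. split.
      * etransitivity; [symmetry; exact (Forall2_length H)|exact Hl].
      * apply (cg_clique B k Y HY). intros y Hy.
        destruct (F2_r _ _ _ H y Hy) as [x Hx]. eapply h4; eauto.
    + intros (h1 & h3 & h4 & h5).
      split; [exact h1|]. split; [exact h3|]. split; [exact h4|].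
      intros s t u H. exact (h5 (inl s) t u H).
Qed.

Lemma sm_fwd kind (w1 w2 : (A -> B -> Prop) -> Prop) (P : A -> B -> Prop) :
  spoiler_moves A B (clique_guarded A k) (clique_guarded B k) kind w1 P ->
  (forall Q, w1 Q -> w2 Q) ->
  spoiler_moves (Cstr A) (Cstr B) (atom_guarded (Cstr A) k) (atom_guarded (Cstr B) k)
    kind w2 P.
Proof.
  intros [Hf Hb] Hw. split.
  - intros X' HX'. apply (guard_equiv A k inhA hk) in HX'.
    destruct (Hf X' HX') as (Y' & P' & HY & Hm & Hag & Hwin).
    exists Y', P'. split; [apply (guard_equiv B k inhB hk); exact HY|].
    split; [apply (map_equiv kind X' Y' P' HX' HY); exact Hm|].
    split; auto.
  - intros Hkd Y' HY'. apply (guard_equiv B k inhB hk) in HY'.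
    destruct (Hb Hkd Y' HY') as (X' & P' & HX & Hm & Hag & Hwin).
    exists X', P'. split; [apply (guard_equiv A k inhA hk); exact HX|].
    split; [apply (map_equiv Bisim X' Y' P' HX HY'); exact Hm|].
    split; auto.
Qed.

Lemma sm_bwd kind (w1 w2 : (A -> B -> Prop) -> Prop) (P : A -> B -> Prop) :
  spoiler_moves (Cstr A) (Cstr B) (atom_guarded (Cstr A) k) (atom_guarded (Cstr B) k)
    kind w1 P ->
  (forall Q, w1 Q -> w2 Q) ->
  spoiler_moves A B (clique_guarded A k) (clique_guarded B k) kind w2 P.
Proof.
  intros [Hf Hb] Hw. split.
  - intros X' HX'. pose proof HX' as HX0. apply (guard_equiv A k inhA hk) in HX'.
    destruct (Hf X' HX') as (Y' & P' & HY & Hm & Hag & Hwin).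
    apply (guard_equiv B k inhB hk) in HY.
    exists Y', P'. split; [exact HY|].
    split; [apply (map_equiv kind X' Y' P' HX0 HY); exact Hm|].
    split; auto.
  - intros Hkd Y' HY'. pose proof HY' as HY0. apply (guard_equiv B k inhB hk) in HY'.
    destruct (Hb Hkd Y' HY') as (X' & P' & HX & Hm & Hag & Hwin).
    apply (guard_equiv A k inhA hk) in HX.
    exists X', P'. split; [exact HX|].
    split; [apply (map_equiv Bisim X' Y' P' HX HY0); exact Hm|].
    split; auto.
Qed.

Lemma n_equiv kind n : forall P : A -> B -> Prop,
  dup_wins_n A B (clique_guarded A k) (clique_guarded B k) kind n P <->
  dup_wins_n (Cstr A) (Cstr B) (atom_guarded (Cstr A) k) (atom_guarded (Cstr B) k) kind n P.
Proof.
  induction n; simpl; intros P; [tauto|]. split; intros H.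
  - apply (sm_fwd kind _ _ P H). intros Q; apply IHn.
  - apply (sm_bwd kind _ _ P H). intros Q; apply IHn.
Qed.
End Transfer.

Lemma coind {V : vocab} (A B : structure V) gA gB kind (R : (A -> B -> Prop) -> Prop) :
  (forall P, R P -> spoiler_moves A B gA gB kind R P) ->
  forall P, R P -> dup_wins_inf A B gA gB kind P.
Proof.
  intros H. cofix CH. intros P HR. constructor.
  destruct (H P HR) as [Hf Hb]. split.
  - intros X' HX'. destruct (Hf X' HX') as (Y' & P' & a & b & c & d).
    exists Y', P'. split; [exact a|]. split; [exact b|]. split; [exact c|].
    exact (CH P' d).
  - intros Hk Y' HY'. destruct (Hb Hk Y' HY') as (X' & P' & a & b & c & d).
    exists X', P'. split; [exact a|]. split; [exact b|]. split; [exact c|].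
    exact (CH P' d).
Qed.

Lemma unfold_inf {V : vocab} (A B : structure V) gA gB kind P :
  dup_wins_inf A B gA gB kind P -> spoiler_moves A B gA gB kind (dup_wins_inf A B gA gB kind) P.
Proof. intros [H]; exact H. Qed.

Lemma game_equiv {V : vocab} (A B : structure V) kind rounds k :
  inhabited A -> inhabited B -> kok k ->
  (clique_game kind rounds k A B <-> atom_game_C kind rounds k A B).
Proof.
  intros hA hB hk. unfold clique_game, atom_game_C, duplicator_wins.
  destruct rounds as [n|].
  - apply n_equiv; auto.
  - split; intros H.
    + apply (coind (Cstr A) (Cstr B) _ _ kind
        (dup_wins_inf A B (clique_guarded A k) (clique_guarded B k) kind)); [|exact H].
      intros P HP. apply (sm_fwd A B k hA hB hk kind _ _ P (unfold_inf _ _ _ _ _ _ HP)).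
      auto.
    + apply (coind A B _ _ kind
        (dup_wins_inf (Cstr A) (Cstr B) (atom_guarded (Cstr A) k) (atom_guarded (Cstr B) k) kind));
        [|exact H].
      intros P HP. apply (sm_bwd A B k hA hB hk kind _ _ P (unfold_inf _ _ _ _ _ _ HP)).
      auto.
Qed.

Theorem proposition8p2 (V : vocab) (A B : structure V) :
  inhabited A -> inhabited B ->
  (clique_game Bisim None None A B <-> atom_game_C Bisim None None A B) /\
  (forall n : nat,
     clique_game Bisim (Some n) None A B <-> atom_game_C Bisim (Some n) None A B) /\
  (forall k : nat, 1 <= k ->
     clique_game Bisim None (Some k) A B <-> atom_game_C Bisim None (Some k) A B) /\
  (clique_game Sim None None A B <-> atom_game_C Sim None None A B).
Proof.
  intros hA hB. split; [|split; [|split]].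
  - apply game_equiv; simpl; auto.
  - intros n. apply game_equiv; simpl; auto.
  - intros k hk. apply game_equiv; simpl; auto.
  - apply game_equiv; simpl; auto.
Qed.
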